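(* Let $w$ be a word and let $v$ be an explicit node of the Cover Suffix Tree $\mathit{CST}(w)$ other than the root, and let $v_1,v_2,\ldots,v_k$ be the consecutive implicit nodes on the edge from $v$ to its explicit parent, ordered so that $|v_i|=|v|-i$. Then for $1\le i\le k$, $$\c(v_i)=\c(v)-i\,\Delta(v);$$ in particular $(\c(v_i))_{i=1}^k$ is an arithmetic progression.
   Context: Positions of $w$ are $1,\ldots,n$. The suffix trie of $w$ has one node for each factor of $w$ (the root for the empty word), the parent of the node of $ua$ ($a$ a letter) being the node of $u$; for a node $v$, $\hat v$ denotes the corresponding factor and $|v|=|\hat v|$. In the suffix tree of $w$, the explicit nodes are the root, the nodes with at least two children, and the nodes corresponding to suffixes of $w$; all other nodes are implicit, and each edge is a maximal upward path of implicit nodes between an explicit node and its nearest explicit proper ancestor (its explicit parent). $\mathit{CST}(w)$ is obtained by additionally making explicit every node $v$ (an extra node) such that $\hat v\hat v$ is a factor of $w$ with $\hat v$ primitive (a word $u$ is primitive if $u=y^k$ implies $y=u$). $\mathit{Occ}(v,w)$ is the set of starting positions of occurrences of $\hat v$ in $w$; for a set $X$ of integers, $\mathrm{next}_X(x)=\min\{y\in X:y>x\}$ (or $\infty$ if $x=\max X$), and $\delta(i,v)=\mathrm{next}_{\mathit{Occ}(v,w)}(i)-i$ for $i\in \mathit{Occ}(v,w)$. $\mathit{Covered}(u,w)$ is the number of positions of $w$ lying within some occurrence of $u$. Finally $\c(v)=\mathit{Covered}(\hat v,w)$ and $\Delta(v)=|\{i\in\mathit{Occ}(v,w):\delta(i,v)\ge|v|\}|$.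 *)

(* Defs.v *)
From mathcomp Require Import all_boot all_algebra.
Set Implicit Arguments. Unset Strict Implicit. Unset Printing Implicit Defensive.

Section Words.
Variable A : eqType.
Implicit Types (u w : seq A).

(* Positions of w are 1..n; u occurs at position i (1-based). *)
Definition occurs_at u w (i : nat) : bool :=
  [&& 1 <= i, i + size u <= (size w).+1 & take (size u) (drop i.-1 w) == u].

Definition Occ u w : seq nat := [seq i <- iota 1 (size w) | occurs_at u w i].

(* next_X(x) = min {y in X : y > x}; None encodes infinity. *)
Definition next_in (X : seq nat) (x : nat) : option nat :=
  let Y := [seq y <- X | x < y] in
  if Y is y0 :: _ then Some (foldr minn y0 Y) else None.

Definition delta u w (i : nat) : option nat :=
  omap (fun y => y - i) (next_in (Occ u w) i).

Definition Delta u w : nat :=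
  count (fun i => if delta u w i is Some d then size u <= d else true) (Occ u w).

Definition covered u w : nat :=
  count (fun p => has (fun i => (i <= p) && (p < i + size u)) (Occ u w))
        (iota 1 (size w)).

Definition primitive u : Prop :=
  forall (y : seq A) (k : nat), u = flatten (nseq k y) -> y = u.

(* Explicit nodes of CST(w) (for a factor u of w): root, branching nodes
   (at least two children ua, ub), suffixes of w, and extra nodes
   (uu factor of w with u primitive). *)
Definition cst_explicit w u : Prop :=
  [\/ u = [::],
      exists a b : A, [/\ a != b, infix (rcons u a) w & infix (rcons u b) w],
      suffix u w
    | infix (u ++ u) w /\ primitive u].

End Words.

(* Main.v *)
Require Import Defs.
From mathcomp Require Import all_boot all_algebra.
From mathcomp Require Import zify.
Set Implicit Arguments. Unset Strict Implicit. Unset Printing Implicit Defensive.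

Section Help.
Variable A : eqType.

Lemma occP (a0 : A) u w i :
  occurs_at u w i <-> [/\ 0 < i, i + size u <= (size w).+1 &
     forall j, j < size u -> nth a0 w (i.-1 + j) = nth a0 u j].
Proof.
rewrite /occurs_at; split.
- case/and3P => H1 H2 /eqP H3; split => // j Hj.
  by rewrite -[in RHS]H3 nth_take // nth_drop.
- case=> H1 H2 H3; rewrite H1 H2 /=; apply/eqP.
  apply: (@eq_from_nth _ a0).
  + rewrite size_takel // size_drop; lia.
  + move=> j; rewrite size_takel ?size_drop; last lia.
    by move=> Hj; rewrite nth_take // nth_drop H3.
Qed.

Lemma occ_cat (u w : seq A) i : occurs_at u w i ->
  w = take i.-1 w ++ u ++ drop (i.-1 + size u) w.
Proof.
case/and3P => _ _ /eqP H.
by rewrite addnC -drop_drop -{1}H !cat_take_drop.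
Qed.

Lemma cat_occ (p u q : seq A) : occurs_at u (p ++ u ++ q) (size p).+1.
Proof.
rewrite /occurs_at /= drop_size_cat // take_size_cat // eqxx !size_cat andbT.
apply/leP; lia.
Qed.

Lemma occ_infix (u w : seq A) i : occurs_at u w i -> infix u w.
Proof. move/occ_cat => E; rewrite E; exact: infix_infix. Qed.

Lemma mem_Occ (u w : seq A) i :
  (i \in Occ u w) = (i \in iota 1 (size w)) && occurs_at u w i.
Proof. by rewrite mem_filter andbC. Qed.

Lemma Occ_uniq (u w : seq A) : uniq (Occ u w).
Proof. by rewrite filter_uniq // iota_uniq. Qed.

Lemma Occ_bound (u w : seq A) x : x \in Occ u w -> 0 < x /\ x + size u <= (size w).+1.
Proof. by rewrite mem_filter => /andP[/and3P[H1 H2 _] _]. Qed.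

Lemma nth_flatten_nseq (a0:A) (y : seq A) m j : j < m * size y ->
  nth a0 (flatten (nseq m y)) j = nth a0 y (j %% size y).
Proof.
elim: m j => [|m IH] j; first by rewrite mul0n.
move=> Hj /=; rewrite nth_cat; case: ltnP => H; first by rewrite modn_small.
rewrite IH; last by move: Hj; rewrite mulSn; lia.
by rewrite -[in RHS](subnK H) modnDr.
Qed.

Lemma size_flatten_nseq (y:seq A) m : size (flatten (nseq m y)) = m * size y.
Proof. by elim: m => //= m IH; rewrite size_cat IH mulSn. Qed.

Lemma key (a0:A) (v w : seq A) x d : 0 < d < size v -> occurs_at v w x -> occurs_at v w (x + d) ->
  (forall z, x < z < x + d -> ~~ occurs_at v w z) ->
  infix (take d v ++ take d v) w /\ @primitive A (take d v).
Proof.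
move=> /andP[d0 dl] /(occP a0) [x0 Hx Ox] /(occP a0) [_ Hxd Oxd] Hmin.
set u := take d v.
have su : size u = d by rewrite size_takel // ltnW.
have Wp : forall j, j < size v + d -> nth a0 w (x.-1 + j) = nth a0 w (x.-1 + j %% d).
  elim/ltn_ind => j IH Hj; case: (ltnP j d) => Hjd; first by rewrite modn_small.
  have h1 : nth a0 w (x.-1 + j) = nth a0 v (j - d).
    rewrite -Oxd; last lia.
    by congr nth; lia.
  rewrite h1 -Ox; last lia.
  rewrite IH; [|lia|lia].
  by rewrite -[in RHS](subnK Hjd) modnDr.
have Wu : forall j, j < size v + d -> nth a0 w (x.-1 + j) = nth a0 u (j %% d).
  move=> j Hj; rewrite Wp // Ox; last exact: ltn_trans (ltn_pmod j d0) dl.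
  by rewrite nth_take // ltn_pmod.
split.
- apply: (@occ_infix _ _ x); apply/(occP a0); split => //.
    rewrite size_cat su; lia.
  move=> j; rewrite size_cat su => Hj; rewrite Wu; last lia.
  rewrite nth_cat su; case: ltnP => H; first by rewrite modn_small.
  by rewrite -{1}(subnK H) modnDr modn_small //; lia.
- move=> y m Hu.
  case: m Hu => [|[|m]] Hu.
  + by rewrite Hu /= in su; lia.
  + by rewrite Hu /= cats0.
  + exfalso. have sd : d = m.+2 * size y by rewrite -su Hu size_flatten_nseq.
    have e0 : 0 < size y by nia.
    have ed : size y < d by nia.
    have ue : forall j, j < d -> nth a0 u j = nth a0 y (j %% size y).
      by move=> j Hj; rewrite Hu nth_flatten_nseq //; lia.
    have dvd : size y %| d by rewrite sd dvdn_mull.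
    have Wy : forall j, j < size v + d -> nth a0 w (x.-1 + j) = nth a0 y (j %% size y).
      by move=> j Hj; rewrite Wu // ue ?ltn_pmod // modn_dvdm.
    apply: (negP (Hmin (x + size y) _)); first lia.
    apply/(occP a0); split; [lia | lia | ].
    move=> j Hj.
    have -> : (x + size y).-1 + j = x.-1 + (size y + j) by lia.
    rewrite Wy; last lia.
    rewrite -Ox // Wy; last lia.
    by rewrite modnDl.
Qed.

Lemma Occ_ext (a0 : A) (w u' : seq A) a : infix (rcons u' a) w -> ~ cst_explicit w u' ->
  Occ u' w = Occ (rcons u' a) w.
Proof.
move=> Hinf Hne; apply: eq_filter => p; apply/idP/idP.
- move=> Hocc; have [p0 Hp Op] := (occP a0 _ _ _).1 Hocc.
  have Hn : p + size u' <= size w.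
    rewrite leqNgt; apply/negP => Hgt; apply: Hne; apply: Or43.
    have E := occ_cat Hocc.
    rewrite (drop_oversize (s := w)) ?cats0 in E; last lia.
    rewrite E; exact: suffix_suffix.
  set b := nth a0 w (p.-1 + size u').
  have Ob : occurs_at (rcons u' b) w p.
    apply/(occP a0); split => //; rewrite ?size_rcons; first lia.
    move=> j Hj; rewrite nth_rcons; case: ltnP => H; first exact: Op.
    have Ej : j = size u' by lia.
    by rewrite Ej eqxx.
  have ab : a = b.
    apply/eqP; apply/negPn/negP => nab; apply: Hne; apply: Or42.
    by exists a, b; split => //; exact: occ_infix Ob.
  by rewrite ab.
- move/(occP a0) => [p0 Hp Op]; apply/(occP a0); split => //.
    by rewrite size_rcons in Hp; lia.
  move=> j Hj; have := Op j; rewrite size_rcons nth_rcons Hj => -> //; lia.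
Qed.

End Help.

Definition covp (X : seq nat) L p := has (fun x => (x <= p) && (p < x + L)) X.
Definition cov (X : seq nat) L n := count (covp X L) (iota 1 n).
Definition Dc (X : seq nat) L :=
  count (fun x => all (fun y => ~~ ((x < y) && (y < x + L))) X) X.

Lemma count_split (T:Type) (a b : pred T) s :
  count a s = count (fun x => a x && b x) s + count (fun x => a x && ~~ b x) s.
Proof. elim: s => //= x s ->; case: (a x); case: (b x) => /=; lia. Qed.

Lemma cov_step X L n : 0 < L -> uniq X ->
  (forall x, x \in X -> 0 < x /\ x + L <= n.+1) -> cov X L n = cov X L.-1 n + Dc X L.
Proof.
move=> L0 uX HX; rewrite /cov (count_split _ (covp X L.-1)); congr (_ + _).
- apply: eq_count => p /=; case hb: (covp X L.-1 p); rewrite ?andbF ?andbT //.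
  move/hasP: hb => [x xX /andP [H1 H2]]; apply/hasP; exists x => //.
  apply/andP; split => //; lia.
- rewrite /Dc -!size_filter -[X in _ = X](size_map (addn^~ L.-1)); apply: perm_size.
  apply: uniq_perm.
  + by apply: filter_uniq; exact: iota_uniq.
  + rewrite map_inj_uniq; [exact: filter_uniq | exact: addIn].
  + move=> p; rewrite mem_filter mem_iota; apply/idP/idP.
    * case/andP => /andP [/hasP [x xX /andP[H1 H2]] Hnb] Hp.
      have H3 : ~~ (p < x + L.-1).
        apply: contra Hnb => H; apply/hasP; exists x => //; by rewrite H1 H.
      apply/mapP; exists x; last lia.
      rewrite mem_filter xX andbT; apply/allP => y yX; apply/negP => /andP[Hy1 Hy2].
      move/negP: Hnb; apply; apply/hasP; exists y => //; apply/andP; split; lia.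
    * case/mapP => x; rewrite mem_filter => /andP [HQ xX] ->.
      have [H1 H2] := HX x xX.
      apply/andP; split; last lia.
      apply/andP; split.
        by apply/hasP; exists x => //; apply/andP; split; lia.
      apply/hasP => -[y yX /andP[Hy1 Hy2]].
      move/allP: HQ => /(_ y yX) /negP; apply; apply/andP; split; lia.
Qed.

Lemma next_all (X : seq nat) x L :
  (if omap (fun y => y - x) (next_in X x) is Some d then L <= d else true)
  = all (fun y => ~~ ((x < y) && (y < x + L))) X.
Proof.
have foldP : forall y0 s z, (z <= foldr minn y0 s) = (z <= y0) && all (fun y => z <= y) s.
  move=> y0 s z; elim: s => [|y s IH] /=; first by rewrite andbT.
  by rewrite leq_min IH andbCA.
have E : all (fun y => ~~ ((x < y) && (y < x + L))) X
         = all (fun y => x + L <= y) [seq y <- X | x < y].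
  rewrite all_filter; apply: eq_all => y /=; rewrite negb_and -leqNgt.
  by rewrite -leqNgt; case: leqP.
rewrite E /next_in; case E2: [seq y <- X | x < y] => [|y0 s] //=.
have Hall : all (fun y => x < y) (y0 :: s) by rewrite -E2 filter_all.
have Hm : x <= minn y0 (foldr minn y0 s).
  rewrite leq_min foldP; move: Hall => /= /andP[h1 h2]; rewrite (ltnW h1) /=.
  by apply/allP => z zs; move/allP: h2 => /(_ z zs) /ltnW.
rewrite leq_subRL // leq_min foldP /=.
by rewrite andbA andbb.
Qed.

Lemma Delta_Dc (A : eqType) (u w : seq A) : Delta u w = Dc (Occ u w) (size u).
Proof. by apply: eq_count => x; rewrite -next_all. Qed.

Lemma main_nat (A : eqType) (w v : seq A) (k : nat) : infix v w -> v <> [::] ->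
  (forall j, 1 <= j <= k -> ~ cst_explicit w (take (size v - j) v)) ->
  forall i, 1 <= i <= k -> covered v w = covered (take (size v - i) v) w + i * Delta v w.
Proof.
move=> Hvw Hv0 Hk i Hi.
case Ev: v Hv0 => [//|a0 v'] _; rewrite -Ev.
have l0 : 0 < size v by rewrite Ev.
set l := size v in l0 Hk *. set X := Occ v w. set n := size w.
have kl : k < l.
  rewrite ltnNge; apply/negP => H; apply: (Hk l); first lia.
  by rewrite subnn take0; apply: Or41.
have HO : forall j, j <= k -> Occ (take (l - j) v) w = X.
  elim => [|j IH] Hj; first by rewrite subn0 take_size.
  rewrite -IH; last lia.
  have E : take (l - j) v = rcons (take (l - j.+1) v) (nth a0 v (l - j.+1)).
    rewrite -take_nth; [congr take; lia | rewrite /l; lia].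
  rewrite E; apply: (Occ_ext a0).
    rewrite -E; apply: (@infix_trans _ v) => //.
    have := prefix_infix (take (l-j) v) (drop (l-j) v); by rewrite cat_take_drop.
  apply: Hk; lia.
have Xb : forall x, x \in X -> 0 < x /\ x + l <= n.+1 by move=> x; apply: Occ_bound.
have uX : uniq X := Occ_uniq v w.
have Dinv : forall L, 0 < L <= l -> l - L < k -> Dc X L = Dc X l.
  move=> L /andP[L0 Ll] Hlk; apply: eq_in_count => x xX /=.
  apply/idP/idP; last first.
    move/allP => H; apply/allP => y yX; apply: contra (H y yX) => /andP[h1 h2].
    by apply/andP; split => //; lia.
  move=> HL; apply/allP => y yX; apply/negP => /andP [xy yx].
  have ex : exists z, (z \in X) && (x < z) by exists y; rewrite yX.
  case: (ex_minnP ex) => z /andP [zX xz] zmin.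
  have zy : z <= y by apply: zmin; rewrite yX.
  have zL : x + L <= z.
    by move/allP: HL => /(_ z zX); rewrite negb_and xz /= -leqNgt.
  have Ox : occurs_at v w x by move: xX; rewrite /X mem_Occ => /andP[].
  have Oz : occurs_at v w z by move: zX; rewrite /X mem_Occ => /andP[].
  have [Hinf Hprim] : infix (take (z - x) v ++ take (z - x) v) w /\ @primitive A (take (z - x) v).
    apply: (key a0 (x := x)) => //; first by rewrite /l in yx l0; lia.
      by have -> : x + (z - x) = z by lia.
    move=> z' /andP[h1 h2]; apply/negP => Oz'.
    have : z <= z'.
      apply: zmin; rewrite /X mem_Occ Oz' andbT mem_iota.
      move: Oz' => /and3P [q1 q2 _]; rewrite /l in l0; lia.
    lia.
  apply: (Hk (l - (z - x))); first lia.
  have -> : l - (l - (z - x)) = z - x by lia.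
  by apply: Or44; split.
have main : forall t, t <= i -> cov X l n = cov X (l - t) n + t * Dc X l.
  elim => [|t IH] Ht; first by rewrite subn0 mul0n addn0.
  rewrite IH; last lia.
  rewrite (@cov_step _ (l - t)) //; [| lia | ]; last first.
    by move=> x /Xb [h1 h2]; split; lia.
  rewrite -subnS Dinv; [|lia|lia].
  by rewrite mulSn addnA.
have cv : forall u, covered u w = cov (Occ u w) (size u) (size w) by [].
rewrite !cv HO; last lia.
rewrite size_takel ?leq_subr // Delta_Dc.
apply: main; lia.
Qed.

Local Open Scope ring_scope.

Theorem lemma1 (A : eqType) (w v : seq A) (k : nat) :
  infix v w -> v <> [::] -> cst_explicit w v ->
  (forall j : nat, (1 <= j <= k)%N -> ~ cst_explicit w (take (size v - j) v)) ->
  forall i : nat, (1 <= i <= k)%N ->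
    (covered (take (size v - i) v) w)%:Z
      = (covered v w)%:Z - (i * Delta v w)%:Z.
Proof.
move=> H1 H2 _ H4 i Hi.
by rewrite (main_nat H1 H2 H4 Hi) PoszD GRing.addrK.
Qed.
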